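(* Let $\Lambda=(W_j,\Lambda_j,v_j)_{j\in\mathbb{J}}$ be a g-fusion frame for $H$ with g-fusion frame operator $S_\Lambda$, and let $\tilde W_j:=S_\Lambda^{-1}W_j$ and $\tilde{\Lambda}_j:=\Lambda_j\pi_{W_j}S_\Lambda^{-1}$. Let $\mathbb{I}$ be a finite subset of $\mathbb{J}$, $\mathbb{I}^c=\mathbb{J}\setminus\mathbb{I}$, and for $\mathbb{K}\subseteq\mathbb{J}$ define $S_{\mathbb{K}}f:=\sum_{j\in\mathbb{K}}v_j^2\pi_{W_j}\Lambda_j^*\tilde{\Lambda}_j\pi_{\tilde W_j}f$ ($f\in H$). Then for every $f\in H$, $$\sum_{j\in\mathbb{I}}v_j^2\langle \tilde{\Lambda}_j \pi_{\tilde{W}_j}f,\Lambda_j \pi_{W_j}f\rangle-\Vert S_{\mathbb{I}}f\Vert^2 =\sum_{j\in\mathbb{I}^c}v_j^2\overline{\langle \tilde{\Lambda}_j \pi_{\tilde{W}_j}f,\Lambda_j \pi_{W_j}f\rangle}-\Vert S_{\mathbb{I}^c}f\Vert^2.$$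
   Context: $H$ is a separable Hilbert space, $\mathbb{J}\subseteq\mathbb{Z}$, $\{H_j\}_{j\in\mathbb{J}}$ are separable Hilbert spaces, $\Lambda_j\in\mathcal{B}(H,H_j)$, $W_j$ are closed subspaces of $H$, $v_j>0$, and $\pi_V$ denotes the orthogonal projection onto a closed subspace $V$. The triple $\Lambda=(W_j,\Lambda_j,v_j)$ is a g-fusion frame for $H$ if there exist $0<A\le B<\infty$ with $A\Vert f\Vert^2\le\sum_{j\in\mathbb{J}}v_j^2\Vert\Lambda_j\pi_{W_j}f\Vert^2\le B\Vert f\Vert^2$ for all $f\in H$. Its g-fusion frame operator is $S_\Lambda f=\sum_{j\in\mathbb{J}}v_j^2\pi_{W_j}\Lambda_j^*\Lambda_j\pi_{W_j}f$, which is bounded, positive and invertible. The triple $(S_\Lambda^{-1}W_j,\Lambda_j\pi_{W_j}S_\Lambda^{-1},v_j)$ is the canonical dual g-fusion frame. *)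

(* Defs.v *)
From HB Require Import structures.
From mathcomp Require Import all_boot all_order all_algebra finmap.
From mathcomp Require Import all_classical all_reals all_analysis.
From mathcomp Require Import complex.
Import Order.TTheory GRing.Theory Num.Theory.
Import numFieldNormedType.Exports.

Set Implicit Arguments.
Unset Strict Implicit.
Unset Printing Implicit Defensive.

Local Open Scope classical_set_scope.
Local Open Scope ring_scope.

(* The filter of all finite subsets of I, directed by inclusion:
   used to express unconditional summation sum_{j in J} a_j. *)
Definition totally {I : choiceType} : set_system {fset I} :=
  filter_from setT (fun A => [set B | (A `<=` B)%fset]).

Definition partial_sum {I : choiceType} {V : zmodType}
  (x : I -> V) (A : {fset I}) : V := \sum_(i : A) x (val i).

Definition has_sum {K : numFieldType} {V : normedModType K}
  (J : set int) (a : int -> V) (s : V) : Prop :=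
  partial_sum (fun j => if `[< J j >] then a j else 0) @ totally --> s.

Definition sumJ {K : numFieldType} {V : normedModType K}
  (J : set int) (a : int -> V) : V :=
  lim (partial_sum (fun j => if `[< J j >] then a j else 0) @ totally).

Section Hilbert.
Variable R : realType.
Local Notation C := R[i].

Definition inner_product {V : normedModType C} (ip : V -> V -> C) : Prop :=
  [/\ forall a x1 x2 y, ip (a *: x1 + x2) y = a * ip x1 y + ip x2 y,
      forall x y, ip y x = (ip x y)^* &
      forall x, ip x x = `|x| ^+ 2].

Definition separable {V : normedModType C} : Prop :=
  exists u : nat -> V, closure (range u) = setT.

Definition closed_subspace {V : normedModType C} (W : set V) : Prop :=
  [/\ W 0, forall x y, W x -> W y -> W (x + y),
      forall (a : C) x, W x -> W (a *: x) & closed W].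

Definition bounded_linear {U V : normedModType C} (T : U -> V) : Prop :=
  linear T /\ continuous T.

Definition is_adjoint {U V : normedModType C} (ipU : U -> U -> C)
  (ipV : V -> V -> C) (T : U -> V) (Tstar : V -> U) : Prop :=
  forall x y, ipV (T x) y = ipU x (Tstar y).

Definition is_orth_proj {V : normedModType C} (ip : V -> V -> C)
  (W : set V) (P : V -> V) : Prop :=
  forall x, W (P x) /\ forall y, W y -> ip (x - P x) y = 0.

Local Open Scope complex_scope.

(* The g-fusion frame condition for (W_j, Lambda_j, v_j)_{j in J}, with
   P j the orthogonal projection onto W j:
   A |f|^2 <= sum_{j in J} v_j^2 |Lambda_j pi_{W_j} f|^2 <= B |f|^2. *)
Definition gfusion_frame_bounds {H : normedModType C} {Hj : int -> normedModType C}
  (J : set int) (P : int -> H -> H) (Lam : forall j, H -> Hj j) (v : int -> R)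
  (A B : R) : Prop :=
  [/\ 0 < A, A <= B &
    forall f : H, exists2 s : C,
      has_sum (V := C^o) J (fun j => ((v j) ^+ 2)%:C * `|Lam j (P j f)| ^+ 2) s &
      (A%:C * `|f| ^+ 2 <= s) && (s <= B%:C * `|f| ^+ 2)].

Definition gfusion_frame_op {H : normedModType C} {Hj : int -> normedModType C}
  (J : set int) (P : int -> H -> H) (Lam : forall j, H -> Hj j)
  (Lamstar : forall j, Hj j -> H) (v : int -> R) (f : H) : H :=
  sumJ J (fun j => ((v j) ^+ 2)%:C *: P j (Lamstar j (Lam j (P j f)))).

(* S_K f = sum_{j in K} v_j^2 pi_{W_j} Lambda_j^* Lt_j Pt_j f,
   with Lt_j = tilde Lambda_j and Pt_j = pi_{tilde W_j} *)
Definition S_K {H : normedModType C} {Hj : int -> normedModType C}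
  (K : set int) (P : int -> H -> H) (Lamstar : forall j, Hj j -> H)
  (Lt : forall j, H -> Hj j) (Pt : int -> H -> H) (v : int -> R) (f : H) : H :=
  sumJ K (fun j => ((v j) ^+ 2)%:C *: P j (Lamstar j (Lt j (Pt j f)))).

End Hilbert.

(* Main.v *)
Require Import Defs.
From HB Require Import structures.
From mathcomp Require Import all_boot all_order all_algebra finmap.
From mathcomp Require Import all_classical all_reals all_analysis.
From mathcomp Require Import complex.
From mathcomp.algebra_tactics Require Import ring.
Import Order.TTheory GRing.Theory Num.Theory.
Import numFieldNormedType.Exports.
Local Open Scope classical_set_scope.
Local Open Scope ring_scope.
Set Implicit Arguments.
Unset Strict Implicit.
Unset Printing Implicit Defensive.
Local Open Scope complex_scope.

Lemma totally_filter (I : choiceType) : ProperFilter (@totally I).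
Proof.
apply: filter_from_proper.
  apply: filter_from_filter; first by exists fset0.
  move=> A B _ _; exists (A `|` B)%fset => //= X /=.
  by move=> h; split; apply: fsubset_trans h; [apply: fsubsetUl|apply: fsubsetUr].
by move=> A _; exists A => /=.
Qed.
#[global] Existing Instance totally_filter.

Section PS.
Variables (I : choiceType) (V : zmodType).
Implicit Types x : I -> V.

Lemma ps_split (x : I -> V) (A B : {fset I}) : (A `<=` B)%fset ->
  partial_sum x B = partial_sum x A + partial_sum x (B `\` A)%fset.
Proof.
move=> AB.
have E (C : {fset I}) : partial_sum x C = \sum_(i <- C) x i.
  by rewrite big_seq_fsetE.
rewrite !E.
rewrite (big_fsetID _ (mem A)); congr (_ + _); apply: eq_fbigl => i;
  rewrite !inE /=.
  by apply/andP/idP => [[]//|iA]; split=> //; apply: (fsubsetP AB).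
by rewrite andbC.
Qed.

Lemma ps_morph (W : zmodType) (f : V -> W) (x : I -> V) A :
  f 0 = 0 -> {morph f : u v / u + v} ->
  f (partial_sum x A) = partial_sum (fun i => f (x i)) A.
Proof. by move=> f0 fD; rewrite /partial_sum (big_morph f fD f0). Qed.

Lemma ps_sub (x y : I -> V) A :
  partial_sum (fun i => x i - y i) A = partial_sum x A - partial_sum y A.
Proof. by rewrite /partial_sum sumrB. Qed.

Lemma ps_eq0 (x : I -> V) A : (forall i, i \in A -> x i = 0) -> partial_sum x A = 0.
Proof. by move=> h; rewrite /partial_sum big1 // => i _; apply: h; apply: valP. Qed.
End PS.
Arguments ps_split {I V} x {A B}.

Section HS.
Variables (K : numFieldType) (V W : normedModType K).

Lemma has_sum_lim (J : set int) (a : int -> V) s : has_sum J a s -> sumJ J a = s.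
Proof. by move=> h; apply: cvg_lim. Qed.

Lemma has_sum_map (J : set int) (a : int -> V) s (f : V -> W) :
  f 0 = 0 -> {morph f : u v / u + v} -> {for s, continuous f} ->
  has_sum J a s -> has_sum J (fun j => f (a j)) (f s).
Proof.
move=> f0 fD fc h; rewrite /has_sum.
have -> : partial_sum (fun j => if `[< J j >] then f (a j) else 0) =
   f \o partial_sum (fun j => if `[< J j >] then a j else 0).
  apply: funext => A /=; rewrite ps_morph //; congr partial_sum.
  by apply: funext => j; case: ifP.
exact: (cvg_comp _ _ h fc).
Qed.

Lemma has_sum_sub (J I : set int) (a : int -> V) s t : I `<=` J ->
  has_sum J a s -> has_sum I a t -> has_sum (J `\` I) a (s - t).
Proof.
move=> IJ hJ hI; rewrite /has_sum.
have -> : partial_sum (fun j => if `[< (J `\` I) j >] then a j else 0) =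
  (fun A => partial_sum (fun j => if `[< J j >] then a j else 0) A -
            partial_sum (fun j => if `[< I j >] then a j else 0) A).
  apply: funext => A; rewrite -ps_sub; congr partial_sum; apply: funext => j.
  case: (asboolP (I j)) => Ij.
    rewrite asboolF ?subrr //; last by case.
    by rewrite asboolT ?subrr //; apply: IJ.
  case: (asboolP (J j)) => Jj; first by rewrite asboolT ?subr0.
  by rewrite asboolF ?subrr // => -[].
apply: cvgB; [exact: hJ| exact: hI].
Qed.

Lemma has_sum_fin (I : set int) (a : int -> V) : finite_set I ->
  exists s, has_sum I a s.
Proof.
move=> /finite_fsetP [F ->]; exists (partial_sum (fun j => if `[< [set` F] j >] then a j else 0) F).
apply: cvg_near_cst; exists F => // B /= FB.
rewrite (ps_split _ FB) [X in _ + X]ps_eq0 ?addr0 // => i; rewrite !inE => /andP[iF _].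
by case: asboolP => // /= h; rewrite h in iF.
Qed.
End HS.


Section IP.
Variable R : realType.
Local Notation C := R[i].
Local Notation cj := (@Num.conj _).

Lemma cjD (a b : C) : cj (a + b) = cj a + cj b. Proof. exact: raddfD. Qed.
Lemma cjB (a b : C) : cj (a - b) = cj a - cj b. Proof. exact: raddfB. Qed.
Lemma cjN (a : C) : cj (- a) = - cj a. Proof. exact: raddfN. Qed.
Lemma cjM (a b : C) : cj (a * b) = cj a * cj b. Proof. exact: rmorphM. Qed.
Lemma cjV (a : C) : cj (a^-1) = (cj a)^-1. Proof. exact: fmorphV. Qed.
Lemma cj0 : cj (0 : C) = 0. Proof. exact: raddf0. Qed.
Lemma cjK (a : C) : cj (cj a) = a. Proof. exact: conjCK. Qed.

Lemma cj_cont (s : C^o) : {for s, continuous (fun z : C^o => (cj z : C^o))}.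
Proof.
apply/(@cvgrPdist_lt _ _ _ _ (nbhs_filter s)) => e e0; near=> z.
rewrite -cjB norm_conjC.
near: z; exact: (@cvgr_dist_lt _ _ _ (nbhs s) (nbhs_filter s) id s cvg_id e e0).
Unshelve. all: by end_near.
Qed.

Variable V : normedModType C.
Variable ip : V -> V -> C.
Hypothesis hip : inner_product ip.

Lemma ipD x1 x2 y : ip (x1 + x2) y = ip x1 y + ip x2 y.
Proof. by case: hip => h _ _; have := h 1 x1 x2 y; rewrite scale1r mul1r. Qed.

Lemma ip0l y : ip 0 y = 0.
Proof.
have e := ipD 0 0 y; rewrite addr0 in e.
by apply: (addrI (ip 0 y)); rewrite addr0 -e.
Qed.

Lemma ipZ a x y : ip (a *: x) y = a * ip x y.
Proof. by case: hip => h _ _; have := h a x 0 y; rewrite !addr0 ip0l addr0. Qed.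

Lemma ipN x y : ip (- x) y = - ip x y.
Proof. by rewrite -scaleN1r ipZ mulN1r. Qed.

Lemma ipB x1 x2 y : ip (x1 - x2) y = ip x1 y - ip x2 y.
Proof. by rewrite ipD ipN. Qed.

Lemma ipC x y : ip y x = cj (ip x y).
Proof. by case: hip. Qed.

Lemma ipxx x : ip x x = `|x| ^+ 2.
Proof. by case: hip. Qed.

Lemma ipDr x y1 y2 : ip x (y1 + y2) = ip x y1 + ip x y2.
Proof. by rewrite ipC ipD cjD -!ipC. Qed.

Lemma ipZr x a y : ip x (a *: y) = cj a * ip x y.
Proof. by rewrite ipC ipZ cjM -ipC. Qed.

Lemma ip0r x : ip x 0 = 0.
Proof. by rewrite ipC ip0l cj0. Qed.

Lemma ipNr x y : ip x (- y) = - ip x y.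
Proof. by rewrite ipC ipN cjN -ipC. Qed.

Lemma ipBr x y1 y2 : ip x (y1 - y2) = ip x y1 - ip x y2.
Proof. by rewrite ipDr ipNr. Qed.

Lemma ip_CS x y : `|ip x y| <= `|x| * `|y|.
Proof.
have [->|y0] := eqVneq y 0; first by rewrite ip0r !normr0 mulr0.
have nbpos : 0 < ip y y by rewrite ipxx exprn_gt0 // normr_gt0.
have nbJ : cj (ip y y) = ip y y by rewrite -ipC.
have key : 0 <= ip (x - (ip x y / ip y y) *: y) (x - (ip x y / ip y y) *: y).
  by rewrite ipxx exprn_ge0.
rewrite ipB !ipBr !ipZ !ipZr (ipC x y) cjM cjV nbJ in key.
have nb0 : ip y y != 0 by rewrite gt_eqF.
move: key.
set z := ip x y; set nb := ip y y.
have -> : ip x x - cj z / nb * z - (z / nb * cj z - z / nb * (cj z / nb * nb)) =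
  ip x x - z * cj z / nb by field.


rewrite subr_ge0 ler_pdivrMr // -normCK ipxx /nb ipxx -exprMn => h.
by rewrite -(@ler_pXn2r _ 2) // nnegrE ?mulr_ge0.
Qed.

Lemma ip_contl b (s : V) : {for s, continuous (fun x => (ip x b : C^o))}.
Proof.
apply/(@cvgrPdist_lt _ _ _ _ (nbhs_filter s)) => e e0.
have bp : 0 < `|b| + 1 by rewrite ltr_wpDl.
near=> x.
rewrite -ipB; apply: (le_lt_trans (ip_CS _ _)).
have : `|s - x| < e / (`|b| + 1).
  near: x; exact: (@cvgr_dist_lt _ _ _ (nbhs s) (nbhs_filter s) id s cvg_id _ (divr_gt0 e0 bp)).
rewrite ltr_pdivlMr // => h; apply: le_lt_trans h.
by rewrite ler_wpM2l // lerDl.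
Unshelve. all: by end_near.
Qed.

Lemma ip_eq0 u : (forall z, ip u z = 0) -> u = 0.
Proof.
by move=> h; have := h u; rewrite ipxx => /eqP; rewrite expf_eq0 /= normr_eq0 => /eqP.
Qed.
End IP.

Lemma proj_sym (R : realType) (V : normedModType R[i]) (ip : V -> V -> R[i])
  (hip : inner_product ip) W P : is_orth_proj ip W P ->
  forall x y, ip (P x) y = ip x (P y).
Proof.
move=> hP x y.
have h1 : ip (P x) (y - P y) = 0.
  by rewrite (ipC hip) (hP y).2 ?conjC0 //; apply: (hP x).1.
have h2 : ip (x - P x) (P y) = 0 by rewrite (hP x).2 //; apply: (hP y).1.
move/eqP: h1; rewrite (ipBr hip) subr_eq0 => /eqP ->.
by move/eqP: h2; rewrite (ipB hip) subr_eq0 => /eqP ->.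
Qed.

Lemma amgm (F : numFieldType) (a b t : F) : 0 <= a -> 0 <= b -> 0 < t ->
  a * b <= (t * a ^+ 2 + b ^+ 2 / t) / 2.
Proof.
move=> ha hb ht.
have h : 0 <= (t * a - b) ^+ 2.
  by rewrite -realEsqr rpredB // ?rpredM // ger0_real // ltW.
rewrite ler_pdivlMr // -(ler_pM2r ht) -subr_ge0.
have t0 : t != 0 by rewrite gt_eqF.
have -> : (t * a ^+ 2 + b ^+ 2 / t) * t - a * b * 2 * t = (t * a - b) ^+ 2 by field.
exact: h.
Qed.

Unset Implicit Arguments.
Unset Strict Implicit.
Local Open Scope complex_scope.

Lemma has_sum_ev (K : numFieldType) (V : normedModType K) (J : set int) (a : int -> V) s e :
  has_sum J a s -> 0 < e -> exists A0 : {fset int}, forall B, (A0 `<=` B)%fset ->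
  `|s - partial_sum (fun j => if `[< J j >] then a j else 0) B| < e.
Proof.
move=> h e0; move/cvgrPdist_lt: h => /(_ e e0) [A0 _ hA0].
by exists A0 => B /hA0.
Qed.

Arguments has_sum_ev {K V J a s e}.

Lemma ps_lin (I : choiceType) (F : numFieldType) (x y : I -> F) (al be : F) A :
  partial_sum (fun i => al * x i + be * y i) A =
  al * partial_sum x A + be * partial_sum y A.
Proof. by rewrite /partial_sum big_split /= -!mulr_sumr. Qed.

Arguments ps_lin {I F} x y al be A.

Section Frame.
Variable R : realType.
Local Notation C := R[i].
Local Notation cj := (@Num.conj _).
Variables (H : completeNormedModType C) (ip : H -> H -> C) (hip : inner_product ip).
Variables (J : set int) (Hj : int -> completeNormedModType C)
  (ipj : forall j, Hj j -> Hj j -> C) (hipj : forall j : int, inner_product (ipj j)).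
Variables (W : int -> set H) (P : int -> H -> H)
  (hP : forall j, is_orth_proj ip (W j) (P j)).
Variables (Lam : forall j, H -> Hj j) (Lamstar : forall j, Hj j -> H)
  (hLamstar : forall j, is_adjoint ip (ipj j) (Lam j) (Lamstar j)).
Variables (v : int -> R) (A B : R) (hframe : gfusion_frame_bounds J P Lam v A B).

Definition T a j := ((v j) ^+ 2)%:C *: P j (Lamstar j (Lam j (P j a))).

Definition N a := partial_sum (fun j => if `[< J j >] then
   ((v j) ^+ 2)%:C * `|Lam j (P j a)| ^+ 2 else 0).

Lemma term_ip a b j : ip (T a j) b =
  ((v j) ^+ 2)%:C * ipj j (Lam j (P j a)) (Lam j (P j b)).
Proof.
rewrite /T (ipZ hip) (proj_sym hip (hP j)).
by rewrite (ipC hip (P j b)) -hLamstar -(ipC (hipj j)).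
Qed.

Lemma ltr0c (k : R) : (0 < k%:C) = (0 < k).
Proof. by rewrite ltcE /= eqxx. Qed.

Lemma Bpos : 0 < B%:C.
Proof. by case: hframe => A0 AB _; rewrite ltr0c (lt_le_trans A0 AB). Qed.

Lemma v2_ge0 j : 0 <= ((v j) ^+ 2)%:C.
Proof. by rewrite ler0c sqr_ge0. Qed.

Lemma N_ge0 a D : 0 <= N a D.
Proof.
rewrite /N /partial_sum sumr_ge0 // => i _; case: ifP => _ //.
by rewrite mulr_ge0 ?v2_ge0 // exprn_ge0.
Qed.

Lemma FB x D : N x D <= B%:C * `|x| ^+ 2.
Proof.
case: hframe => _ _ /(_ x) [s hs /andP[sA sB]].
apply: le_trans sB.
have Nr : N x D \is Num.real by rewrite ger0_real // N_ge0.
have sr : s \is Num.real.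
  have h0 : 0 <= A%:C * `|x| ^+ 2.
    by rewrite mulr_ge0 // ?exprn_ge0 // ler0c; case: hframe => /ltW.
  by rewrite ger0_real // (le_trans h0 sA).
case: (real_leP Nr sr) => // sN; exfalso.
have e0 : 0 < N x D - s by rewrite subr_gt0.
have [A0 hA0] := has_sum_ev hs e0.
have h : `|s - N x (A0 `|` D)%fset| < N x D - s := hA0 _ (fsubsetUl _ _).
have le1 : N x D <= N x (A0 `|` D)%fset.
  rewrite /N (ps_split _ (fsubsetUr A0 D)) lerDl; exact: N_ge0.
have r' : N x (A0 `|` D)%fset - s \is Num.real.
  by rewrite rpredB // ger0_real // N_ge0.
have := le_lt_trans (real_ler_norm r'); rewrite distrC => /(_ _ h).
by rewrite ltrD2r => /lt_le_trans/(_ le1); rewrite ltxx.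
Qed.

Lemma key_est a D :
  `|partial_sum (fun j => if `[< J j >] then T a j else 0) D| ^+ 2 <= B%:C * N a D.
Proof.
set x := partial_sum (fun j => if `[< J j >] then T a j else 0) D.
have e1 : `|x| ^+ 2 = partial_sum (fun j => if `[< J j >] then
     ((v j)^+2)%:C * ipj j (Lam j (P j a)) (Lam j (P j x)) else 0) D.
  rewrite -(ipxx hip) {1}/x (ps_morph (f := fun u => ip u x)); last 2 first.
  - exact: ip0l.
  - by move=> u w; rewrite (ipD hip).
  congr partial_sum; apply: funext => j; case: ifP => _; [exact: term_ip | exact: ip0l].
have Bp := Bpos.
have B0 : B%:C != 0 by rewrite gt_eqF.
have e2 : `|x| ^+ 2 <= partial_sum (fun j => if `[< J j >] then
     ((v j)^+2)%:C * ((B%:C * `|Lam j (P j a)| ^+ 2 + `|Lam j (P j x)| ^+ 2 / B%:C) / 2)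
     else 0) D.
  have xr : `|x| ^+ 2 \is Num.real by rewrite ger0_real // exprn_ge0.
  apply: le_trans (real_ler_norm xr) _; rewrite e1.
  apply: le_trans (ler_norm_sum _ _ _) _.
  apply: ler_sum => i _; case: ifP => _; last by rewrite normr0.
  rewrite normrM ger0_norm ?v2_ge0 // ler_wpM2l ?v2_ge0 //.
  apply: le_trans (ip_CS (hipj (val i)) _ _) _.
  by apply: amgm.
have e3 : partial_sum (fun j => if `[< J j >] then
     ((v j)^+2)%:C * ((B%:C * `|Lam j (P j a)| ^+ 2 + `|Lam j (P j x)| ^+ 2 / B%:C) / 2)
     else 0) D = B%:C / 2 * N a D + (2 * B%:C)^-1 * N x D.
  rewrite /N -ps_lin; congr partial_sum; apply: funext => j.
  case: ifP => _; last by rewrite !mulr0 addr0.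
  by field; exact: B0.
rewrite e3 in e2.
have e4 : `|x| ^+ 2 <= B%:C / 2 * N a D + `|x| ^+ 2 / 2.
  apply: le_trans e2 _; rewrite lerD2l.
  apply: le_trans (ler_wpM2l _ (FB x D)) _.
    by rewrite invr_ge0 mulr_ge0 // ltW.
  by rewrite le_eqVlt; apply/orP; left; apply/eqP; field; exact: B0.
rewrite -subr_ge0.
have -> : B%:C * N a D - `|x| ^+ 2 = 2 * (B%:C / 2 * N a D + `|x| ^+ 2 / 2 - `|x| ^+ 2).
  by field.
by rewrite mulr_ge0 // subr_ge0.
Qed.

Lemma T_cvg a : cvg (partial_sum (fun j => if `[< J j >] then T a j else 0) @ totally).
Proof.
apply/cauchy_cvgP; apply/cauchy_ballP => e e0.
case: hframe => _ _ /(_ a) [s hs _].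
have Bp := Bpos.
set d := (e / 2) ^+ 2 / B%:C.
have d0 : 0 < d / 2 by rewrite /d !divr_gt0 // exprn_gt0 // divr_gt0.
have [A0 hA0] := has_sum_ev hs d0.
set ps := partial_sum (fun j => if `[< J j >] then T a j else 0).
have near1 : \forall y \near (ps @ totally), ball (ps A0) (e / 2) y.
  exists A0 => // D hD /=.
  rewrite -ball_normE /= /ps (ps_split _ hD) opprD addrA subrr add0r normrN.
  have hN : N a (D `\` A0)%fset < d.
    have -> : N a (D `\` A0)%fset = N a D - N a A0.
      by rewrite /N (ps_split _ hD); ring.
    have r : N a D - N a A0 \is Num.real by rewrite rpredB // ger0_real // N_ge0.
    apply: le_lt_trans (real_ler_norm r) _.
    have -> : N a D - N a A0 = (s - N a A0) - (s - N a D) by ring.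
    apply: le_lt_trans (ler_normB _ _) _.
    rewrite [d](splitr d) ltrD //; [exact: hA0 | exact: hA0].
  have h2 : `|partial_sum (fun j => if `[< J j >] then T a j else 0) (D `\` A0)%fset| ^+ 2
      < (e / 2) ^+ 2.
    apply: le_lt_trans (key_est _ _) _.
    have -> : (e / 2) ^+ 2 = B%:C * d by rewrite /d; field; rewrite gt_eqF.
    by rewrite ltr_pM2l.
  have e2p : 0 <= e / 2 by rewrite ltW // divr_gt0.
  by rewrite -(@ltr_pXn2r _ 2) // !nnegrE ?normr_ge0.
near=> x y; apply: (@ball_splitr _ _ (ps A0)); [near: x|near: y]; rewrite nbhs_filterE; exact: near1.
Unshelve. all: by end_near.
Qed.

Local Notation S := (gfusion_frame_op J P Lam Lamstar v).

Lemma T_has_sum a : has_sum J (T a) (S a).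
Proof. exact: T_cvg. Qed.

Lemma S_adj a b : ip (S a) b = ip a (S b).
Proof.
have h1 := has_sum_map (f := fun x => (ip x b : C^o)) (ip0l hip b)
  (fun u w => ipD hip u w b) (ip_contl hip (b:=b) (s:=S a)) (T_has_sum a).
have h2 := has_sum_map (f := fun x => (ip x a : C^o)) (ip0l hip a)
  (fun u w => ipD hip u w a) (ip_contl hip (b:=a) (s:=S b)) (T_has_sum b).
have h3 := has_sum_map (f := fun z : C^o => (cj z : C^o)) (@cj0 R) (@cjD R) (@cj_cont R _) h2.
have E : (fun j => ip (T a j) b) = (fun j => cj (ip (T b j) a)).
  apply: funext => j /=.
  by rewrite !term_ip cjM conj_Creal ?ger0_real ?v2_ge0 // -(ipC (hipj j)).
rewrite E in h1.
by rewrite (ipC hip (S b)) -(has_sum_lim h1) -(has_sum_lim h3).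
Qed.

Variables (Sinv : H -> H) (hSinv : cancel S Sinv /\ cancel Sinv S).

Lemma Sinv_adj y w : ip (Sinv y) w = ip y (Sinv w).
Proof.
by rewrite -{1}[w]hSinv.2 -S_adj hSinv.2.
Qed.

Variables (Pt : int -> H -> H) (hPt : forall j, is_orth_proj ip (Sinv @` W j) (Pt j)).

Lemma PSinvPt j f : P j (Sinv (Pt j f)) = P j (Sinv f).
Proof.
apply/eqP; rewrite -subr_eq0; apply/eqP; apply: (ip_eq0 hip) => z.
rewrite (ipB hip) !(proj_sym hip (hP j)) !Sinv_adj -(ipB hip).
have h : ip (f - Pt j f) (Sinv (P j z)) = 0.
  by apply: (hPt j f).2; exists (P j z) => //; exact: (hP j z).1.
by rewrite -opprB (ipN hip) h oppr0.
Qed.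


Variables (I : set int) (hIfin : finite_set I) (hIJ : I `<=` J) (f : H).

Lemma main_sec :
  let Lt := fun j (x : H) => Lam j (P j (Sinv x)) in
  let Ic := J `\` I in
  sumJ (V := R[i]^o) I
    (fun j => ((v j) ^+ 2)%:C * ipj j (Lt j (Pt j f)) (Lam j (P j f)))
  - `|S_K I P Lamstar Lt Pt v f| ^+ 2
  = sumJ (V := R[i]^o) Ic
    (fun j => ((v j) ^+ 2)%:C * (ipj j (Lt j (Pt j f)) (Lam j (P j f)))^*)
  - `|S_K Ic P Lamstar Lt Pt v f| ^+ 2.
Proof.
move=> Lt Ic.
have hg := T_has_sum (Sinv f); rewrite (hSinv.2 f) in hg.
have eT : (fun j => ((v j)^+2)%:C *: P j (Lamstar j (Lt j (Pt j f)))) = T (Sinv f).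
  by apply: funext => j; rewrite /Lt PSinvPt.
have [X hX] := @has_sum_fin _ _ I (T (Sinv f)) hIfin.
have hY := has_sum_sub hIJ hg hX.
have SI : S_K I P Lamstar Lt Pt v f = X by rewrite /S_K eT (has_sum_lim hX).
have SIc : S_K Ic P Lamstar Lt Pt v f = f - X by rewrite /S_K eT (has_sum_lim hY).
have e1 : (fun j => ((v j)^+2)%:C * ipj j (Lt j (Pt j f)) (Lam j (P j f))) =
    (fun j => ip (T (Sinv f) j) f).
  by apply: funext => j; rewrite term_ip /Lt PSinvPt.
have e2 : (fun j => ((v j)^+2)%:C * cj (ipj j (Lt j (Pt j f)) (Lam j (P j f)))) =
    (fun j => cj (ip (T (Sinv f) j) f)).
  apply: funext => j; rewrite term_ip /Lt PSinvPt cjM.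
  by rewrite (@conj_Creal _ ((v j ^+ 2)%:C)) ?ger0_real ?v2_ge0.
rewrite /S_K eT (has_sum_lim hX) (has_sum_lim hY) e1 e2.
have h1 := has_sum_map (f := fun x => (ip x f : C^o)) (ip0l hip f)
  (fun u w => ipD hip u w f) (ip_contl hip (b:=f) (s:=X)) hX.
have h2 := has_sum_map (f := fun x => (ip x f : C^o)) (ip0l hip f)
  (fun u w => ipD hip u w f) (ip_contl hip (b:=f) (s:=f - X)) hY.
have h3 := has_sum_map (f := fun z : C^o => (cj z : C^o)) (@cj0 R) (@cjD R) (@cj_cont R _) h2.
rewrite (has_sum_lim h1) (has_sum_lim h3).
rewrite -!(ipxx hip) !(ipB hip) !(ipBr hip) cjB -!(ipC hip).
by ring.
Qed.

End Frame.

Unset Implicit Arguments.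
Set Strict Implicit.
Local Close Scope complex_scope.
Local Open Scope classical_set_scope.
Local Open Scope ring_scope.
Local Open Scope complex_scope.

Theorem theorem3p2
  (R : realType)
  (H : completeNormedModType R[i]) (ip : H -> H -> R[i])
  (hip : inner_product ip) (hsep : separable (V := H))
  (J : set int)
  (Hj : int -> completeNormedModType R[i])
  (ipj : forall j, Hj j -> Hj j -> R[i])
  (hipj : forall j, inner_product (ipj j))
  (hsepj : forall j, separable (V := Hj j))
  (W : int -> set H) (hW : forall j, closed_subspace (W j))
  (P : int -> H -> H) (hP : forall j, is_orth_proj ip (W j) (P j))
  (Lam : forall j, H -> Hj j) (hLam : forall j, bounded_linear (Lam j))
  (Lamstar : forall j, Hj j -> H)
  (hLamstar : forall j, is_adjoint ip (ipj j) (Lam j) (Lamstar j))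
  (v : int -> R) (hv : forall j, J j -> 0 < v j)
  (A B : R) (hframe : gfusion_frame_bounds J P Lam v A B)
  (Sinv : H -> H)
  (hSinv : cancel (gfusion_frame_op J P Lam Lamstar v) Sinv /\
           cancel Sinv (gfusion_frame_op J P Lam Lamstar v))
  (Pt : int -> H -> H) (hPt : forall j, is_orth_proj ip (Sinv @` W j) (Pt j))
  (I : set int) (hIfin : finite_set I) (hIJ : I `<=` J)
  (f : H) :
  let Lt := fun j (x : H) => Lam j (P j (Sinv x)) in
  let Ic := J `\` I in
  sumJ (V := R[i]^o) I
    (fun j => ((v j) ^+ 2)%:C * ipj j (Lt j (Pt j f)) (Lam j (P j f)))
  - `|S_K I P Lamstar Lt Pt v f| ^+ 2
  = sumJ (V := R[i]^o) Ic
    (fun j => ((v j) ^+ 2)%:C * (ipj j (Lt j (Pt j f)) (Lam j (P j f)))^*)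
  - `|S_K Ic P Lamstar Lt Pt v f| ^+ 2.
Proof.
exact: (@main_sec R H ip hip J Hj ipj hipj W P hP Lam Lamstar hLamstar v A B hframe Sinv hSinv Pt hPt I hIfin hIJ f).
Qed.
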